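(* For every finite graph $G$ with at least one edge and $\mathrm{tww}(G)\geq 3$, and every positive integer $r$, \[ \mathrm{scol}_r(G)\leq 3\,(\mathrm{tww}(G)-1)^r\,\bar\omega(G). \]
   Context: $\bar\omega(G)$ denotes the maximum integer $s$ such that the complete bipartite graph $K_{s,s}$ is a subgraph of $G$. Twin-width: a trigraph is a vertex set together with two disjoint sets of edges, black and red. Contracting two vertices $x,y$ of a trigraph produces a trigraph in which $x,y$ are replaced by a new vertex $z$ adjacent to every other vertex $w$ adjacent (by any edge) to $x$ or to $y$; the edge $zw$ is black if $xw$ and $yw$ are both black edges, and red otherwise; all other edges are unchanged. A $d$-contraction sequence of an $n$-vertex graph $G$ is a sequence of trigraphs $\mathbf G_n,\dots,\mathbf G_1$ where $\mathbf G_n$ is $G$ with all edges black, each $\mathbf G_i$ is obtained from $\mathbf G_{i+1}$ by one contraction, $\mathbf G_1$ has a single vertex, and every vertex of every $\mathbf G_i$ is incident to at most $d$ red edges. The twin-width $\mathrm{tww}(G)$ is the minimum $d$ for which $G$ has a $d$-contraction sequence. Strong colouring number: for a linear order $L$ of $V(G)$, a vertex $u$ is strongly $r$-reachable from $v$ if there is a path of length at most $r$ between $u$ and $v$ with $u\le_L v$ and all inner vertices $w$ satisfying $v<_L w$; $\mathrm{Sreach}_r[L,v]$ is the set of such $u$ (including $v$), and $\mathrm{scol}_r(G)=\min_L\max_{v}|\mathrm{Sreach}_r[L,v]|$ over linear orders $L$ of $V(G)$. *)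

(* Defs.v *)
(* A finite simple graph is a symmetric irreflexive relation
   e on a finite type T. *)
From mathcomp Require Import all_boot.
Set Implicit Arguments. Unset Strict Implicit. Unset Printing Implicit Defensive.

Section Defs.
Variable T : finType.

Definition Kss (e : rel T) (A B : {set T}) : bool :=
  [&& #|A| == #|B|, [disjoint A & B] & [forall a in A, forall b in B, e a b]].

Definition omega_bar (e : rel T) : nat :=
  \max_(A : {set T} | [exists B : {set T}, Kss e A B]) #|A|.

(* A linear order L of V(G) is given by an injective rank function
   rk : T -> 'I_#|T| (u <=_L v iff rk u <= rk v). *)
(* u is strongly r-reachable from v: u <=_L v and there is a path
   v = p_0, p_1, ..., p_k = u with k <= r whose inner vertices w satisfy
   v <_L w.  The inner vertices are the k-1-tuple q. *)
Definition sreach (e : rel T) (rk : {ffun T -> 'I_#|T|}) (r : nat) (v u : T) : bool :=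
  (rk u <= rk v) &&
  ((u == v) ||
   [exists k : 'I_r, [exists q : k.-tuple T,
      [&& path e v (rcons q u), uniq (v :: rcons q u)
        & all (fun w => rk v < rk w) q]]]).

Definition Sreach (e : rel T) (rk : {ffun T -> 'I_#|T|}) (r : nat) (v : T) : {set T} :=
  [set u | sreach e rk r v u].

Definition scol (e : rel T) (r : nat) : nat :=
  \big[minn/#|T|]_(rk : {ffun T -> 'I_#|T|} | injectiveb rk)
     \max_(v : T) #|Sreach e rk r v|.

(* Vertices of the trigraphs are labelled by the set of original vertices they
   stand for (the contraction of x and y is labelled x :|: y).  Black and red
   edges are relations on labels; only pairs of current vertices matter. *)
Record trigraph := Trigraph {
  tverts : {set {set T}};
  tblack : rel {set T};
  tred   : rel {set T} }.

Definition init_trigraph (e : rel T) : trigraph :=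
  Trigraph [set [set v] | v : T]
    (fun A B => [exists u, exists w, [&& A == [set u], B == [set w] & e u w]])
    (fun _ _ => false).

Definition contract (G : trigraph) (x y : {set T}) : trigraph :=
  let z := x :|: y in
  let adj a w := tblack G a w || tred G a w in
  let zblack w := tblack G x w && tblack G y w in
  let zred w := (adj x w || adj y w) && ~~ zblack w in
  Trigraph (z |: (tverts G :\ x :\ y))
    (fun a b => if a == z then (b != z) && zblack b
                else if b == z then zblack a
                else tblack G a b)
    (fun a b => if a == z then (b != z) && zred b
                else if b == z then zred a
                else tred G a b).

Definition red_deg_le (d : nat) (G : trigraph) : Prop :=
  forall v, v \in tverts G -> #|[set w in tverts G | tred G v w]| <= d.

(* s = [:: G_n; ...; G_1] is a d-contraction sequence of the graph e *)
Definition contraction_seq (e : rel T) (d : nat) (s : seq trigraph) : Prop :=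
  let G0 := init_trigraph e in
  [/\ 0 < size s,
      nth G0 s 0 = init_trigraph e,
      #|tverts (last G0 s)| = 1,
      (forall i, i.+1 < size s ->
         exists x y, [/\ x \in tverts (nth G0 s i), y \in tverts (nth G0 s i),
                         x != y & nth G0 s i.+1 = contract (nth G0 s i) x y])
    & (forall i, i < size s -> red_deg_le d (nth G0 s i))].

Definition is_tww (e : rel T) (t : nat) : Prop :=
  (exists s, contraction_seq e t s) /\
  (forall d s, contraction_seq e d s -> t <= d).

End Defs.

(* Main.v *)
Require Import Defs.
From mathcomp Require Import all_boot zify.
Set Implicit Arguments. Unset Strict Implicit. Unset Printing Implicit Defensive.

Section Inv.
Variable T : finType.
Variable e : rel T.
Hypothesis e_sym : symmetric e.

Record Inv (G : trigraph T) : Prop := {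
  inv_ne : forall A, A \in tverts G -> A != set0;
  inv_cov : forall a, exists2 A, A \in tverts G & a \in A;
  inv_uniq : forall A B a, A \in tverts G -> B \in tverts G -> a \in A -> a \in B -> A = B;
  inv_sym : forall A B, A \in tverts G -> B \in tverts G ->
     tblack G A B = tblack G B A /\ tred G A B = tred G B A;
  inv_cpl : forall A B, A \in tverts G -> B \in tverts G -> A != B -> tblack G A B ->
     forall a b, a \in A -> b \in B -> e a b;
  inv_edge : forall A B a b, A \in tverts G -> B \in tverts G -> A != B ->
     a \in A -> b \in B -> e a b -> tblack G A B || tred G A B }.

Lemma inv_init : Inv (init_trigraph e).
Proof.
split => /=.
- by move=> A /imsetP [v _ ->]; apply/set0Pn; exists v; rewrite inE.
- by move=> a; exists [set a]; [apply: imset_f | rewrite inE].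
- by move=> A B a /imsetP [u _ ->] /imsetP [w _ ->]; rewrite !inE => /eqP -> /eqP ->.
- move=> A B _ _; split => //; apply/existsP/existsP => [] [u /existsP [w /and3P [h1 h2 h3]]];
  by exists w; apply/existsP; exists u; rewrite h1 h2 /= e_sym.
- move=> A B _ _ _ /existsP [u /existsP [w /and3P [/eqP -> /eqP -> h3]]] a b.
  by rewrite !inE => /eqP -> /eqP ->.
- move=> A B a b /imsetP [u _ ->] /imsetP [w _ ->] _; rewrite !inE => /eqP -> /eqP -> eab.
  by apply/orP; left; apply/existsP; exists u; apply/existsP; exists w; rewrite !eqxx.
Qed.

Section Contract.
Variable G : trigraph T.
Hypothesis HG : Inv G.
Variables x y : {set T}.
Hypotheses (Hx : x \in tverts G) (Hy : y \in tverts G) (Hxy : x != y).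
Let z := x :|: y.

Lemma in_contract A : (A \in tverts (contract G x y)) =
   (A == z) || [&& A \in tverts G, A != x & A != y].
Proof. by rewrite /= !inE; case: (A \in tverts G); case: (A != x); case: (A != y). Qed.

Lemma other_neq_z A : A \in tverts G -> A != x -> A != y -> A != z.
Proof.
move=> HA Ax Ay; apply/eqP => Az.
have /set0Pn [a ax] := inv_ne HG Hx.
have : a \in A by rewrite Az inE ax.
by move/(inv_uniq HG HA Hx)/(_ ax) => /eqP; rewrite (negbTE Ax).
Qed.

Lemma inv_contract : Inv (contract G x y).
Proof.
have zne : z != set0.
  by have /set0Pn [a ax] := inv_ne HG Hx; apply/set0Pn; exists a; rewrite inE ax.
split.
- move=> A; rewrite in_contract => /orP [/eqP -> // | /and3P [HA _ _]].
  exact: inv_ne HG A HA.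
- move=> a; have [A HA aA] := inv_cov HG a.
  case: (boolP ((A == x) || (A == y))) => [/orP [] /eqP EA | ].
  + by exists z; [rewrite in_contract eqxx | rewrite inE -EA aA].
  + by exists z; [rewrite in_contract eqxx | rewrite inE -EA aA orbT].
  + rewrite negb_or => /andP [Ax Ay]; exists A => //.
    by rewrite in_contract HA Ax Ay orbT.
- move=> A B a; rewrite !in_contract.
  move=> /orP [/eqP -> | /and3P [HA Ax Ay]] /orP [/eqP -> | /and3P [HB Bx By]] //.
  + rewrite inE => /orP [ax | ay] aB.
    * by move: (inv_uniq HG HB Hx aB ax) => E; rewrite E eqxx in Bx.
    * by move: (inv_uniq HG HB Hy aB ay) => E; rewrite E eqxx in By.
  + move=> aA; rewrite inE => /orP [ax | ay].
    * by move: (inv_uniq HG HA Hx aA ax) => E; rewrite E eqxx in Ax.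
    * by move: (inv_uniq HG HA Hy aA ay) => E; rewrite E eqxx in Ay.
  + exact: inv_uniq HG A B a HA HB.
- move=> A B; rewrite !in_contract /=.
  move=> /orP [/eqP -> | /and3P [HA Ax Ay]] /orP [/eqP -> | /and3P [HB Bx By]].
  + by rewrite !eqxx.
  + by rewrite eqxx (negbTE (other_neq_z HB Bx By)).
  + by rewrite eqxx (negbTE (other_neq_z HA Ax Ay)).
  + rewrite (negbTE (other_neq_z HB Bx By)) (negbTE (other_neq_z HA Ax Ay)).
    exact: inv_sym HG A B HA HB.
- move=> A B; rewrite !in_contract /=.
  move=> /orP [/eqP -> | /and3P [HA Ax Ay]] /orP [/eqP -> | /and3P [HB Bx By]].
  + by rewrite eqxx.
  + rewrite eqxx (other_neq_z HB Bx By) /= => _ /andP [bx byy] a b.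
    rewrite inE => /orP [ax | ay] bB.
    * by apply: (inv_cpl HG Hx HB _ bx) => //; rewrite eq_sym.
    * by apply: (inv_cpl HG Hy HB _ byy) => //; rewrite eq_sym.
  + rewrite eqxx (negbTE (other_neq_z HA Ax Ay)) => _ /andP [bx byy] a b aA.
    rewrite inE => /orP [bx' | by'].
    * by rewrite e_sym; apply: (inv_cpl HG Hx HA _ bx) => //; rewrite eq_sym.
    * by rewrite e_sym; apply: (inv_cpl HG Hy HA _ byy) => //; rewrite eq_sym.
  + rewrite (negbTE (other_neq_z HB Bx By)) (negbTE (other_neq_z HA Ax Ay)).
    exact: inv_cpl HG A B HA HB.
- move=> A B a b; rewrite !in_contract /=.
  move=> /orP [/eqP -> | /and3P [HA Ax Ay]] /orP [/eqP -> | /and3P [HB Bx By]].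
  + by rewrite eqxx.
  + rewrite eqxx (other_neq_z HB Bx By) /= => _ az bB eab.
    case: (tblack G x B && tblack G y B) => //=.
    move: az; rewrite inE => /orP [ax | ay].
    * by rewrite (inv_edge HG Hx HB _ ax bB eab) // eq_sym.
    * by rewrite (inv_edge HG Hy HB _ ay bB eab) ?orbT // eq_sym.
  + rewrite eqxx (negbTE (other_neq_z HA Ax Ay)) => _ aA bz eab.
    case: (tblack G x A && tblack G y A) => //=.
    move: bz; rewrite inE => /orP [bx | by'].
    * have xA : x != A by rewrite eq_sym.
      by rewrite e_sym in eab; rewrite (inv_edge HG Hx HA xA bx aA eab).
    * have yA : y != A by rewrite eq_sym.
      by rewrite e_sym in eab; rewrite (inv_edge HG Hy HA yA by' aA eab) orbT.
  + rewrite (negbTE (other_neq_z HB Bx By)) (negbTE (other_neq_z HA Ax Ay)).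
    exact: inv_edge HG A B a b HA HB.
Qed.
End Contract.
End Inv.

Lemma card_bigcup_le (I V : finType) (S : {pred I}) (f : I -> {set V}) :
  #|\bigcup_(i in S) f i| <= \sum_(i in S) #|f i|.
Proof.
apply: (big_ind2 (fun (X : {set V}) n => #|X| <= n)) => //; first by rewrite cards0.
move=> X1 n1 X2 n2 h1 h2; apply: leq_trans (leq_card_setU X1 X2) _.
exact: leq_add.
Qed.

Section Ball.
Variable V : finType.
Variable P : {set V}.
Variable R : rel V.
Variable d : nat.
Hypothesis Rsym : forall A B, A \in P -> B \in P -> R A B = R B A.
Hypothesis Rdeg : forall A, A \in P -> #|[set B in P | R A B]| <= d.
Variable X : V.
Hypothesis HX : X \in P.

Fixpoint Ball j := if j is j'.+1 then Ball j' :|: [set B in P | [exists A in Ball j', R A B]]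
  else [set X].

Lemma Ball_sub j : Ball j \subset P.
Proof.
elim: j => [|j IH] /=; first by rewrite sub1set.
by rewrite subUset IH; apply/subsetP => B; rewrite inE => /andP [].
Qed.

Lemma Ball_S j : Ball j \subset Ball j.+1.
Proof. by rewrite /= subsetUl. Qed.

Lemma Ball_mono j k : j <= k -> Ball j \subset Ball k.
Proof.
move=> /subnK <-; elim: (k - j) => [|i IH] //=.
exact: subset_trans IH (Ball_S _).
Qed.

Lemma Ball_step j A B : A \in Ball j -> B \in P -> R A B -> B \in Ball j.+1.
Proof.
move=> HA HB HR; rewrite /= inE; apply/orP; right.
by rewrite inE HB; apply/existsP; exists A; rewrite HA.
Qed.

Lemma Ball_prev j B : B \in Ball j.+1 -> B \notin Ball j ->
  exists2 A, A \in Ball j & R A B.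
Proof.
rewrite /= inE => /orP [-> // | ]; rewrite inE => /andP [_ /existsP [A /andP [h1 h2]]] _.
by exists A.
Qed.

Definition Lay j := if j is j'.+1 then Ball j :\: Ball j' else Ball 0.

Lemma card_Ball j : #|Ball j.+1| = #|Ball j| + #|Lay j.+1|.
Proof.
rewrite /Lay -(cardsID (Ball j) (Ball j.+1)).
by rewrite (setIidPr (Ball_S j)).
Qed.

Lemma Lay1 : #|Lay 1| <= d.
Proof.
apply: leq_trans (Rdeg HX); apply: subset_leq_card; apply/subsetP => B.
move=> /setDP [B1 nB0].
have [A] := Ball_prev B1 nB0; rewrite /= inE => /eqP -> RXB.
have := subsetP (Ball_sub 1) B B1.
by rewrite inE => ->.
Qed.

Lemma LayS j : 0 < j -> #|Lay j.+1| <= (d - 1) * #|Lay j|.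
Proof.
case: j => // j _.
set N := fun A => [set B in P | R A B] :\: Ball j.+1.
have sub : Lay j.+2 \subset \bigcup_(A in Lay j.+1) N A.
  apply/subsetP => B /setDP [B2 nB].
  have [A A1 RAB] := Ball_prev B2 nB.
  have BP := subsetP (Ball_sub j.+2) B B2.
  apply/bigcupP; exists A.
    rewrite inE A1 andbT; apply/negP => A0.
    by move: nB; rewrite (Ball_step A0 BP RAB).
  by rewrite /N in_setD nB in_set BP RAB.
apply: leq_trans (subset_leq_card sub) _.
apply: leq_trans (card_bigcup_le _ _) _.
rewrite mulnC -sum_nat_const; apply: leq_sum => A /setDP [A1 nA0].
have [p p0 RpA] := Ball_prev A1 nA0.
have AP := subsetP (Ball_sub j.+1) A A1.
have pP := subsetP (Ball_sub j) p p0.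
have pN : p \in [set B in P | R A B] by rewrite inE pP (Rsym AP pP).
have sN : N A \subset [set B in P | R A B] :\ p.
  apply/subsetP => B; rewrite /N in_setD => /andP [nB]; rewrite in_set => /andP [BP RAB].
  rewrite in_setD1 in_set BP RAB !andbT; apply/eqP => Bp; subst B.
  by move: nB; rewrite (subsetP (Ball_S j) p p0).
apply: leq_trans (subset_leq_card sN) _.
have := Rdeg AP; rewrite (cardsD1 p _) pN; lia.
Qed.

Lemma Moore r : 0 < r -> 3 <= d ->
  #|Lay r| <= d * (d - 1) ^ r.-1 /\ #|Ball r| + 2 <= 3 * (d - 1) ^ r.
Proof.
case: r => // r _ d3; elim: r => [|r [IH1 IH2]].
  have := Lay1; rewrite card_Ball /= cards1 expn1 expn0; split; lia.
have L := LayS (ltn0Sn r); rewrite card_Ball /=.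
have E : (d - 1) ^ r.+2 = (d - 1) * (d - 1) ^ r.+1 by rewrite expnS.
rewrite E /=.
have E2 : (d - 1) ^ r.+1 = (d - 1) * (d - 1) ^ r by rewrite expnS.
move: IH1 IH2 L; rewrite /= E2; set Z := (d - 1) ^ r.
split; nia.
Qed.

End Ball.

Section Parts.
Variable T : finType.
Variable e : rel T.
Hypothesis e_sym : symmetric e.

Definition pt (G : trigraph T) (a : T) : {set T} := odflt set0 [pick A in tverts G | a \in A].

Lemma ptP G a : Inv e G -> pt G a \in tverts G /\ a \in pt G a.
Proof.
move=> HG; rewrite /pt; case: pickP => [A /andP [h1 h2] // | H].
have [A HA aA] := inv_cov HG a.
by move: (H A); rewrite HA aA.
Qed.

Lemma ptE G A a : Inv e G -> A \in tverts G -> a \in A -> pt G a = A.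
Proof.
move=> HG HA aA; have [h1 h2] := ptP a HG.
exact: (inv_uniq HG h1 HA h2 aA).
Qed.

Lemma parts_disj G A B : Inv e G -> A \in tverts G -> B \in tverts G -> A != B ->
  [disjoint A & B].
Proof.
move=> HG HA HB AB; apply/pred0P => a /=; apply/negP => /andP [aA aB].
by move: AB; rewrite (inv_uniq HG HA HB aA aB) eqxx.
Qed.

Lemma pt_contract G x y a : Inv e G -> x \in tverts G -> y \in tverts G -> x != y ->
  pt G a \subset pt (contract G x y) a.
Proof.
move=> HG Hx Hy Hxy; have HG' := inv_contract e_sym HG Hx Hy.
have [h1 h2] := ptP a HG.
case: (boolP ((pt G a == x) || (pt G a == y))) => [/orP [] /eqP E | ].
- rewrite (@ptE (contract G x y) (x :|: y)) //; first by rewrite E subsetUl.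
  + by rewrite in_contract // eqxx.
  + by rewrite inE -E h2.
- rewrite (@ptE (contract G x y) (x :|: y)) //; first by rewrite E subsetUr.
  + by rewrite in_contract // eqxx.
  + by rewrite inE -E h2 orbT.
- rewrite negb_or => /andP [n1 n2].
  by rewrite (@ptE (contract G x y) (pt G a)) // in_contract // h1 n1 n2 orbT.
Qed.

Lemma pt_contract_same G x y a : Inv e G -> x \in tverts G -> y \in tverts G -> x != y ->
  pt G a != x -> pt G a != y -> pt (contract G x y) a = pt G a.
Proof.
move=> HG Hx Hy Hxy n1 n2; have HG' := inv_contract e_sym HG Hx Hy.
have [h1 h2] := ptP a HG.
by rewrite (@ptE (contract G x y) (pt G a)) // in_contract // h1 n1 n2 orbT.
Qed.

Lemma sub_card (A : {set T}) k : k <= #|A| -> exists2 A' : {set T}, A' \subset A & #|A'| = k.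
Proof.
elim: k => [|k IH] hk; first by exists set0; rewrite ?sub0set ?cards0.
have [A' sA' cA'] := IH (ltnW hk).
have : A :\: A' != set0.
  apply/negP => /eqP E; have := cardsID A' A; rewrite E cards0 addn0.
  rewrite (setIidPr sA') cA' => E2; lia.
case/set0Pn => b; rewrite inE => /andP [nb bA].
exists (b |: A'); first by rewrite subUset sub1set bA sA'.
by rewrite cardsU1 nb cA'.
Qed.

Lemma ob_min (A B : {set T}) : [disjoint A & B] ->
  (forall a b, a \in A -> b \in B -> e a b) -> minn #|A| #|B| <= omega_bar e.
Proof.
move=> dAB cAB.
have [A' sA cA] := sub_card (geq_minl #|A| #|B|).
have [B' sB cB] := sub_card (geq_minr #|A| #|B|).
rewrite -cA; apply: (@leq_bigmax_cond _ (fun A0 : {set T} => [exists B0, Kss e A0 B0])).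
apply/existsP; exists B'; rewrite /Kss cA cB eqxx /=.
rewrite (disjointW sA sB dAB) /=.
apply/forallP => a; apply/implyP => aA; apply/forallP => b; apply/implyP => bB.
by apply: cAB; [apply: (subsetP sA) | apply: (subsetP sB)].
Qed.

End Parts.

Lemma bigminn_le_idx (I : Type) (r : seq I) (P : pred I) (F : I -> nat) x :
  \big[minn/x]_(i <- r | P i) F i <= x.
Proof.
elim: r => [|a r IH]; rewrite ?big_nil ?big_cons //.
by case: (P a) => //; apply: leq_trans (geq_minr _ _) IH.
Qed.

Lemma bigminn_le (I : eqType) (r : seq I) (P : pred I) (F : I -> nat) x j :
  j \in r -> P j -> \big[minn/x]_(i <- r | P i) F i <= F j.
Proof.
elim: r => [|a r IH] //; rewrite inE big_cons => /orP [/eqP <- -> | jr Pj].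
  exact: geq_minl.
case: (P a); last exact: IH.
exact: leq_trans (geq_minr _ _) (IH jr Pj).
Qed.

Section Main.
Variable T : finType.
Variable e : rel T.
Hypothesis e_sym : symmetric e.
Variable d : nat.
Variable s0 : seq (trigraph T).
Hypothesis Hs : contraction_seq e d s0.

Local Notation G0 := (init_trigraph e).
Local Notation m := (size s0).
Local Notation w := (omega_bar e).
Definition Gi i := nth G0 s0 i.

Lemma Gi_step i : i.+1 < m -> exists x y, [/\ x \in tverts (Gi i), y \in tverts (Gi i),
                         x != y & Gi i.+1 = contract (Gi i) x y].
Proof. by case: Hs => _ _ _ Hstep _; exact: Hstep. Qed.

Lemma Gi_inv i : i < m -> Inv e (Gi i).
Proof.
case: Hs => _ H0 _ _ _.
elim: i => [|i IH] hi; first by rewrite /Gi H0; exact: (inv_init e_sym).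
have [x [y [Hx Hy Hxy ->]]] := Gi_step hi.
exact: (inv_contract e_sym (IH (ltnW hi)) Hx Hy).
Qed.

Lemma Gi_deg i : i < m -> red_deg_le d (Gi i).
Proof. by case: Hs => _ _ _ _ H; exact: H. Qed.

Definition bigb i a := w < #|pt (Gi i) a|.

Lemma big_step i a : i.+1 < m -> bigb i a -> bigb i.+1 a.
Proof.
move=> hi; have [x [y [Hx Hy Hxy E]]] := Gi_step hi.
rewrite /bigb E => h; apply: leq_trans h _; apply: subset_leq_card.
exact: (pt_contract e_sym a (Gi_inv (ltnW hi)) Hx Hy Hxy).
Qed.

Lemma big_mono i j a : i <= j -> j < m -> bigb i a -> bigb j a.
Proof.
move=> /subnK <-; elim: (j - i) => [|k IH] //= hk hb.
rewrite addSn; apply: big_step => //; apply: IH => //; exact: ltnW.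
Qed.

Lemma big_last a : w < #|T| -> bigb m.-1 a.
Proof.
move=> hw; case: Hs => m0 _ H1 _ _.
have hm : m.-1 < m by rewrite prednK.
have HG := Gi_inv hm.
have E : Gi m.-1 = last G0 s0 by rewrite /Gi nth_last.
have [h1 h2] := ptP a HG.
rewrite /bigb.
have -> : pt (Gi m.-1) a = setT.
  apply/setP => b; rewrite inE.
  have [k1 k2] := ptP b HG.
  move: H1; rewrite -E => /eqP/cards1P [S ES].
  move: h1 k1; rewrite ES !inE => /eqP h1 /eqP k1.
  by rewrite h1 -k1.
by rewrite cardsT.
Qed.

Lemma big0 a : 0 < w -> ~~ bigb 0 a.
Proof.
move=> hw; case: Hs => _ H0 _ _ _.
have HG := Gi_inv (leq_trans (ltn0Sn 0) (match Hs with And5 h _ _ _ _ => h end)).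
rewrite /bigb (@ptE _ e (Gi 0) [set a]) //.
- by rewrite cards1 -leqNgt.
- by rewrite /Gi H0 /=; apply: imset_f.
- by rewrite inE.
Qed.

Definition tau a := find (bigb^~ a) (iota 0 m).

Section Big.
Hypothesis nbig : w < #|T|.

Lemma has_big a : has (bigb^~ a) (iota 0 m).
Proof.
case: Hs => m0 _ _ _ _.
apply/hasP; exists m.-1; last exact: big_last.
rewrite mem_iota add0n /=; lia.
Qed.

Lemma tau_lt a : tau a < m.
Proof. by have := has_big a; rewrite has_find size_iota. Qed.

Lemma tau_big a : bigb (tau a) a.
Proof.
have := nth_find 0 (has_big a); rewrite nth_iota ?add0n //; exact: tau_lt.
Qed.

Lemma tau_before a j : j < tau a -> ~~ bigb j a.
Proof.
move=> hj; have := before_find 0 hj; rewrite nth_iota ?add0n => [->//|].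
exact: ltn_trans hj (tau_lt a).
Qed.

Lemma tau_pos a : 0 < w -> 0 < tau a.
Proof.
move=> hw; case E: (tau a) => //.
by have := tau_big a; rewrite E (negbTE (big0 a hw)).
Qed.

Lemma ties i : 0 < i -> i < m -> #|[set a | tau a == i]| <= w + w.
Proof.
case: i => // i _ hi.
have [x [y [Hx Hy Hxy E]]] := Gi_step hi.
have HG := Gi_inv (ltnW hi).
set S := (if w < #|x| then set0 else x) :|: (if w < #|y| then set0 else y).
have sub : [set a | tau a == i.+1] \subset S.
  apply/subsetP => a; rewrite inE => /eqP ta.
  have b1 := tau_big a; rewrite ta in b1.
  have b0 : ~~ bigb i a by apply: tau_before; rewrite ta.
  have [h1 h2] := ptP a HG.
  case: (boolP (pt (Gi i) a == x)) => [/eqP ex | nx].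
    move: b0; rewrite /bigb ex => b0; rewrite inE (negbTE b0).
    by rewrite -ex h2.
  case: (boolP (pt (Gi i) a == y)) => [/eqP ey | ny].
    move: b0; rewrite /bigb ey => b0; rewrite inE (negbTE b0).
    by rewrite -ey h2 orbT.
  move: b1; rewrite /bigb E (pt_contract_same e_sym HG Hx Hy Hxy nx ny) => b1.
  by move: b0; rewrite /bigb b1.
apply: leq_trans (subset_leq_card sub) _.
apply: leq_trans (leq_card_setU _ _) _.
apply: leq_add.
  by case: ifP => [_|]; rewrite ?cards0 // => /negbT; rewrite -leqNgt.
by case: ifP => [_|]; rewrite ?cards0 // => /negbT; rewrite -leqNgt.
Qed.


Definition kappa a := (m - tau a) * #|T| + enum_rank a.

Lemma kappa_inj : injective kappa.
Proof.
move=> a b E.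
have : (kappa a) %% #|T| = (kappa b) %% #|T| by rewrite E.
rewrite /kappa !modnMDl !modn_small ?ltn_ord // => E2.
by apply: enum_rank_inj; apply: val_inj.
Qed.

Lemma kappa_tau a b : tau a < tau b -> kappa b < kappa a.
Proof.
move=> h; have hb := tau_lt b.
have eb : nat_of_ord (enum_rank b) < #|T| := ltn_ord (enum_rank b). rewrite /kappa.
set p := m - tau b; set q := m - tau a.
have pq : p < q by rewrite /p /q; lia.
have : p.+1 * #|T| <= q * #|T| by apply: leq_mul.
rewrite mulSn; lia.
Qed.

Definition rkn a := #|[set b | kappa b < kappa a]|.

Lemma rkn_lt a : rkn a < #|T|.
Proof.
have sub : [set b | kappa b < kappa a] \subset [set~ a].
  by apply/subsetP => b; rewrite !inE; apply: contraTneq => ->; rewrite ltnn.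
have := subset_leq_card sub; rewrite cardsC1 /rkn.
have : 0 < #|T| by apply/card_gt0P; exists a.
lia.
Qed.

Lemma rkn_mono a b : kappa a < kappa b -> rkn a < rkn b.
Proof.
move=> h; rewrite /rkn.
have ab : a \in [set c | kappa c < kappa b] by rewrite inE.
rewrite (cardsD1 a [set c | kappa c < kappa b]) ab add1n ltnS.
apply: subset_leq_card; apply/subsetP => c; rewrite !inE => hc.
rewrite (ltn_trans hc h) andbT; apply: contraTneq hc => ->; rewrite ltnn.
by [].
Qed.

Definition rk : {ffun T -> 'I_#|T|} := [ffun a => Ordinal (rkn_lt a)].

Lemma rk_inj : injectiveb rk.
Proof.
apply/injectiveP => a b /(congr1 val); rewrite !ffunE /=.
case: (ltngtP (kappa a) (kappa b)) => [h | h | h].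
- by move/rkn_mono: h => h E; rewrite E ltnn in h.
- by move/rkn_mono: h => h E; rewrite E ltnn in h.
- by move=> _; apply: kappa_inj.
Qed.

Lemma rk_tau a b : rk a <= rk b -> tau b <= tau a.
Proof.
rewrite !ffunE /= => h; rewrite leqNgt; apply/negP => lt.
have := rkn_mono (kappa_tau lt); lia.
Qed.

Section At.
Variable i : nat.
Hypothesis hi : i < m.

Definition blackN (A : {set T}) : {set T} :=
  [set b | [exists B in tverts (Gi i), [&& B != A, tblack (Gi i) A B & b \in B]]].
Definition gset (A : {set T}) : {set T} := if w < #|A| then blackN A else A.

Lemma gset_card A : A \in tverts (Gi i) -> #|gset A| <= w.
Proof.
move=> HA; rewrite /gset; case: ifP => [hA | /negbT]; last by rewrite -leqNgt.
have HG := Gi_inv hi.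
have dis : [disjoint A & blackN A].
  apply/pred0P => b /=; apply/negP => /andP [bA].
  rewrite inE => /existsP [B /andP [HB /and3P [BA blk bB]]].
  by move: BA; rewrite (inv_uniq HG HA HB bA bB) eqxx.
have cpl : forall a b, a \in A -> b \in blackN A -> e a b.
  move=> a b aA; rewrite inE => /existsP [B /andP [HB /and3P [BA blk bB]]].
  have AB : A != B by rewrite eq_sym.
  exact: (inv_cpl HG HA HB AB blk aA bB).
have := ob_min dis cpl; lia.
Qed.

Lemma walk (u : T) (X : {set T}) (q : seq T) : forall x j,
  w < #|pt (Gi i) x| -> pt (Gi i) x \in Ball (tverts (Gi i)) (tred (Gi i)) X j ->
  all (fun c => w < #|pt (Gi i) c|) q -> path e x (rcons q u) ->
  ~~ (w < #|pt (Gi i) u|) ->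
  u \in \bigcup_(A in Ball (tverts (Gi i)) (tred (Gi i)) X (j + size q).+1) gset A.
Proof.
have HG := Gi_inv hi.
elim: q => [|c q IH] x j bx xB.
- move=> _ /=; rewrite andbT => exu nbu.
  have [hx1 hx2] := ptP x HG; have [hu1 hu2] := ptP u HG.
  have neq : pt (Gi i) x != pt (Gi i) u by apply: contraNneq nbu => <-.
  case/orP: (inv_edge HG hx1 hu1 neq hx2 hu2 exu) => [blk | red].
  + apply/bigcupP; exists (pt (Gi i) x); first by rewrite addn0; apply: (subsetP (Ball_S _ _ _ _)).
    rewrite /gset bx inE; apply/existsP; exists (pt (Gi i) u).
    by rewrite hu1 eq_sym neq blk hu2.
  + apply/bigcupP; exists (pt (Gi i) u); first by rewrite addn0; exact: Ball_step xB hu1 red.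
    by rewrite /gset (negbTE nbu).
- rewrite /= => /andP [bc allq] /andP [exc pq] nbu.
  have [hx1 hx2] := ptP x HG; have [hc1 hc2] := ptP c HG.
  have cB : pt (Gi i) c \in Ball (tverts (Gi i)) (tred (Gi i)) X j.+1.
    case: (boolP (pt (Gi i) x == pt (Gi i) c)) => [/eqP <- | neq].
      exact: (subsetP (Ball_S _ _ _ _)).
    case/orP: (inv_edge HG hx1 hc1 neq hx2 hc2 exc) => [blk | red].
      have := ob_min (parts_disj HG hx1 hc1 neq) (inv_cpl HG hx1 hc1 neq blk); lia.
    exact: Ball_step xB hc1 red.
  by have := IH c j.+1 bc cB allq pq nbu; rewrite addSnnS.
Qed.

End At.

Lemma main_v v r : 0 < r -> 3 <= d -> 0 < w -> #|Sreach e rk r v| <= 3 * (d - 1) ^ r * w.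
Proof.
move=> r0 d3 w0.
set i := tau v; have hi := tau_lt v; have HG := Gi_inv hi.
set X := pt (Gi i) v; have [hX1 hX2] := ptP v HG.
have Rsym : forall A B, A \in tverts (Gi i) -> B \in tverts (Gi i) ->
    tred (Gi i) A B = tred (Gi i) B A.
  by move=> A B hA hB; case: (inv_sym HG hA hB).
have Rdeg := Gi_deg hi.
have [_ hM] := Moore Rsym Rdeg hX1 r0 d3.
set Bl := Ball (tverts (Gi i)) (tred (Gi i)) X r.
have sub : Sreach e rk r v \subset [set a | tau a == i] :|: \bigcup_(A in Bl) gset i A.
  apply/subsetP => u; rewrite /Sreach inE /sreach => /andP [ruv H].
  rewrite in_setU in_set; case: (boolP (tau u == i)) => [// | ntu] /=.
  have tu : i < tau u by have := rk_tau ruv; rewrite -/i; lia.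
  have nbu : ~~ (w < #|pt (Gi i) u|) := tau_before tu.
  case/orP: H => [/eqP E | /existsP [k /existsP [q /and3P [pth _ allq]]]].
    by move: ntu; rewrite E eqxx.
  have allb : all (fun c => w < #|pt (Gi i) c|) q.
    apply/allP => c cq; have /= rvc := allP allq c cq.
    have tc : tau c <= tau v := rk_tau (ltnW rvc).
    exact: (big_mono tc hi (tau_big c)).
  have vB : pt (Gi i) v \in Ball (tverts (Gi i)) (tred (Gi i)) X 0 by rewrite /= inE.
  have := walk hi (tau_big v) vB allb pth nbu.
  rewrite size_tuple add0n => /bigcupP [A hA uA]; apply/bigcupP; exists A => //.
  exact: (subsetP (Ball_mono _ _ _ (ltn_ord k))).
apply: leq_trans (subset_leq_card sub) _.
apply: leq_trans (leq_card_setU _ _) _.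
have t1 := ties (tau_pos v w0) hi.
have t2 : #|\bigcup_(A in Bl) gset i A| <= #|Bl| * w.
  apply: leq_trans (card_bigcup_le _ _) _; rewrite -sum_nat_const; apply: leq_sum => A hA.
  by apply: (gset_card hi); exact: (subsetP (Ball_sub (tred (Gi i)) hX1 r) A hA).
have := leq_mul hM (leqnn w); rewrite mulnDl; move: t1 t2; rewrite /Bl /X /i; lia.
Qed.

End Big.
End Main.

Theorem corollary3 (T : finType) (e : rel T)
  (e_sym : symmetric e) (e_irr : irreflexive e)
  (has_edge : exists u v, e u v)
  (t : nat) (t_tww : is_tww e t) (t_ge3 : 3 <= t)
  (r : nat) (r_pos : 0 < r) :
  scol e r <= 3 * (t - 1) ^ r * omega_bar e.
Proof.
have w0 : 0 < omega_bar e.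
  case: has_edge => u [v euv].
  have dis : [disjoint [set u] & [set v]].
    apply/pred0P => x /=; rewrite !inE; apply/negP => /andP [/eqP E1 /eqP E2].
    by move: euv; rewrite -E1 -E2 e_irr.
  have cpl : forall a b, a \in [set u] -> b \in [set v] -> e a b.
    by move=> a b; rewrite !inE => /eqP -> /eqP ->.
  by have := ob_min dis cpl; rewrite !cards1.
case: t_tww => [[s0 Hs] _].
case: (leqP #|T| (omega_bar e)) => [small | nbig].
  rewrite /scol; apply: leq_trans (bigminn_le_idx _ _ _ _) _.
  have : 0 < (t - 1) ^ r by rewrite expn_gt0; apply/orP; left; lia.
  nia.
rewrite /scol; apply: leq_trans (bigminn_le _ _ (mem_index_enum (rk s0 nbig)) (rk_inj s0 nbig)) _.
apply/bigmax_leqP => v _; exact: main_v.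
Qed.
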